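(* Let $\mathcal{C}$ be an $[n,k]_q$ MWS code. If $a,b\in\mathcal{C}\setminus\{0\}$ satisfy $V(a)=V(b)$, then $a=\lambda b$ for some $\lambda\in\mathbb{F}_q^*$.
   Context: $\alpha$ is a fixed primitive element of $\mathbb{F}_q$. An $[n,k]_q$ code is a $k$-dimensional subspace of $\mathbb{F}_q^n$ (non-degenerate if $k\ge 2$) with Hamming weight $w$; it is MWS if $|\{w(c):c\in\mathcal{C}\setminus\{0\}\}|=\frac{q^k-1}{q-1}$. For $c\in\mathbb{F}_q^n$, $\beta\in\mathbb{F}_q$, $c[\beta]=|\{l:c_l=\beta\}|$ and $V(c)=(c[\alpha],\dots,c[\alpha^{q-1}],c[0])$. *)

(* Defs.v *)
From HB Require Import structures.
From mathcomp Require Import all_boot all_order all_algebra.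
Set Implicit Arguments. Unset Strict Implicit. Unset Printing Implicit Defensive.
Import GRing.Theory.
Local Open Scope ring_scope.

Definition hwt (F : finFieldType) (n : nat) (c : 'rV[F]_n) : nat :=
  #|[set i : 'I_n | c 0 i != 0]|.

Definition ccount (F : finFieldType) (n : nat) (c : 'rV[F]_n) (beta : F) : nat :=
  #|[set i : 'I_n | c 0 i == beta]|.

Definition Vvec (F : finFieldType) (alpha : F) (n : nat) (c : 'rV[F]_n) : seq nat :=
  [seq ccount c (alpha ^+ i) | i <- iota 1 (#|F| - 1)] ++ [:: ccount c 0].

Definition weights (F : finFieldType) (n : nat) (C : {vspace 'rV[F]_n}) : seq nat :=
  undup [seq hwt c | c <- enum 'rV[F]_n & (c \in C) && (c != 0)].

Definition MWS (F : finFieldType) (n : nat) (C : {vspace 'rV[F]_n}) : Prop :=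
  size (weights C) = ((#|F| ^ \dim C - 1) %/ (#|F| - 1))%N.

Definition code_nondegenerate (F : finFieldType) (n : nat) (C : {vspace 'rV[F]_n}) : Prop :=
  forall i : 'I_n, exists2 c, c \in C & c 0 i != 0.

(* Main.v *)
Require Import Defs.
From HB Require Import structures.
From mathcomp Require Import all_boot all_order all_algebra all_field.
From mathcomp Require Import zify.
Import GRing.Theory.
Local Open Scope ring_scope.

Lemma hwt_scale (F : finFieldType) (n : nat) (c : 'rV[F]_n) (lam : F) :
  lam != 0 -> hwt (lam *: c) = hwt c.
Proof.
move=> Hl; rewrite /hwt; apply: eq_card => i; rewrite !inE mxE mulf_eq0 negb_or Hl.
by [].
Qed.

Lemma hwt_ccount0 (F : finFieldType) (n : nat) (c : 'rV[F]_n) :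
  (hwt c + ccount c 0%R)%N = n.
Proof.
rewrite /hwt /ccount.
have -> : [set i : 'I_n | c 0 i != 0] = ~: [set i : 'I_n | c 0 i == 0].
  by apply/setP => i; rewrite !inE.
by rewrite addnC cardsC card_ord.
Qed.

Lemma sum_const_seq (s : seq nat) (m : nat) : (\sum_(v <- s) m = size s * m)%N.
Proof. elim: s => [|x s IH]; first by rewrite big_nil. by rewrite big_cons IH mulSn. Qed.

Lemma scale_inj_l (F : finFieldType) (n : nat) (c : 'rV[F]_n) (lam mu : F) :
  c != 0 -> lam *: c = mu *: c -> lam = mu.
Proof.
move=> Hc H; apply/eqP; rewrite -subr_eq0; apply/eqP.
have : (lam - mu) *: c = 0 by rewrite scalerBl H subrr.
by move/eqP; rewrite scaler_eq0 (negbTE Hc) orbF => /eqP.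
Qed.

Theorem mainTheorem6 (F : finFieldType) (alpha : F)
  (Halpha : (#|F|.-1).-primitive_root alpha)
  (n k : nat) (C : {vspace 'rV[F]_n})
  (HdimC : \dim C = k)
  (Hnondeg : (2 <= k)%N -> code_nondegenerate C)
  (HMWS : MWS C)
  (a b : 'rV[F]_n)
  (Ha : a \in C) (Ha0 : a != 0) (Hb : b \in C) (Hb0 : b != 0)
  (HV : Vvec alpha a = Vvec alpha b) :
  exists2 lambda : F, lambda != 0 & a = lambda *: b.
Proof.
case: (boolP [exists lam : F, (lam != 0) && (a == lam *: b)]).
  by case/existsP => lam /andP [H1 /eqP H2]; exists lam.
move=> Hnot; exfalso.
have Hw : hwt a = hwt b.
  have := f_equal (fun s => last 0%N s) HV; rewrite /Vvec !last_cat /= => H0.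
  have := @hwt_ccount0 _ _ a; have := @hwt_ccount0 _ _ b; rewrite H0; lia.
set q := #|F|.
have q1 : (1 < q)%N by apply: finNzRing_gt1.
set S := [set c : 'rV[F]_n | (c \in C) && (c != 0)].
have cardS : #|S| = (q ^ k - 1)%N.
  rewrite -HdimC -card_vspace [in RHS](cardD1 0) mem0v add1n subn1 /=.
  by apply: eq_card => c; rewrite !inE andbC.
set W := weights C.
have Wu : uniq W by apply: undup_uniq.
have inW : forall c, c \in S -> hwt c \in W.
  move=> c; rewrite inE => Hc; rewrite mem_undup; apply/mapP; exists c => //.
  by rewrite mem_filter mem_enum andbT.
have Hsum : #|S| = (\sum_(v <- W) #|[set c in S | hwt c == v]|)%N.
  rewrite -sum1_card.
  transitivity (\sum_(c in S) \sum_(v <- W) (v == hwt c : nat))%N.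
    apply: eq_bigr => c Hc.
    rewrite -big_mkcond /= sum1_count.
    by rewrite -/(count_mem (hwt c) W) count_uniq_mem // inW.
  rewrite exchange_big /=; apply: eq_bigr => v _.
  rewrite -sum1_card [LHS]big_mkcond /=.
  rewrite [RHS]big_mkcond; apply: eq_bigr => c _; rewrite !inE. by case: ((c \in C) && (c != 0)) => //=; rewrite eq_sym; case: eqP.
set line := fun c : 'rV[F]_n => [set lam *: c | lam in [set~ (0:F)]].
have cardline : forall c, c != 0 -> #|line c| = (q - 1)%N.
  move=> c Hc; rewrite card_imset ?cardsC1 ?subn1 //.
  by move=> x y; apply: scale_inj_l.
have lineS : forall c, c \in S -> line c \subset [set x in S | hwt x == hwt c].
  move=> c; rewrite inE => /andP [HcC Hc0]; apply/subsetP => x /imsetP [lam].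
  rewrite in_setC1 => Hl ->; rewrite !inE memvZ // scaler_eq0 negb_or Hl Hc0 /=.
  by rewrite hwt_scale.
have lb : forall v, v \in W -> (q - 1 <= #|[set c in S | hwt c == v]|)%N.
  move=> v; rewrite mem_undup => /mapP [c]; rewrite mem_filter => /andP [Hc _] ->.
  have HcS : c \in S by rewrite inE.
  by rewrite -(cardline c) ?(subset_leq_card (lineS c HcS)) //; case/andP: Hc.
have aS : a \in S by rewrite inE Ha Ha0.
have bS : b \in S by rewrite inE Hb Hb0.
have disj : line a :&: line b = set0.
  apply/setP => x; rewrite !inE; apply/negP => /andP [/imsetP [l Hl ->] /imsetP [m Hm E]].
  move: Hl Hm; rewrite !in_setC1 => Hl Hm.
  move/negP: Hnot; apply; apply/existsP; exists (l^-1 * m).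
  rewrite mulf_neq0 ?invr_eq0 //=; apply/eqP.
  by rewrite -scalerA -E scalerA mulVf // scale1r.
have lb2 : (2 * (q - 1) <= #|[set c in S | hwt c == hwt b]|)%N.
  have := cardsUI (line a) (line b); rewrite disj cards0 addn0 !cardline // => E.
  apply: (@leq_trans #|line a :|: line b|); first by rewrite E; lia.
  apply: subset_leq_card; rewrite subUset lineS //.
  by rewrite -Hw lineS.
have bW := inW b bS.
have : ((size W).+1 * (q - 1) <= q ^ k - 1)%N.
  rewrite -cardS Hsum (bigD1_seq (hwt b)) //=.
  have := sum_const_seq W (q - 1); rewrite (bigD1_seq (hwt b)) //= => E.
  rewrite mulSn -E addnA; apply: leq_add; first by rewrite addnn -mul2n.
  by rewrite big_seq_cond [X in (_ <= X)%N]big_seq_cond; apply: leq_sum => v /andP [Hv _]; apply: lb.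
rewrite /MWS -/W HdimC in HMWS; rewrite HMWS.
have qpos : (0 < q - 1)%N by rewrite subn_gt0.
have := ltn_ceil (q ^ k - 1) qpos.
by move=> H1 H2; move: (leq_trans H1 H2); rewrite ltnn.

Qed.
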